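(* Let $\tilde f(t)=t\int_{1}^{\infty}x^{-tx}\,dx$ for real $t>0$. Then $\tilde f(t)\to1$ as $t\to+\infty$.
   Context: $x^{-tx}=\exp(-tx\ln x)$ for $x\ge1$. *)

(* Defs.v *)
From Stdlib Require Import Reals.
From Coquelicot Require Import Coquelicot.
Open Scope R_scope.

(* x^{-t x} = exp(-t x ln x) for x >= 1 *)
Definition integrand (t x : R) : R := exp (- t * x * ln x).

Definition ftilde (t : R) : R :=
  t * RInt_gen (integrand t) (at_point 1) (Rbar_locally p_infty).

(* Main.v *)
Require Import Defs.
From Stdlib Require Import Reals Lra Classical.
From Coquelicot Require Import Coquelicot.
Open Scope R_scope.

Lemma ln_le_xm1 x : 0 < x -> ln x <= x - 1.
Proof.
  intros Hx.
  assert (H : x <= exp (x - 1)).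
  { destruct (Req_dec (x - 1) 0) as [E|E].
    - replace (x-1) with 0 by lra. rewrite exp_0. lra.
    - pose proof (exp_ineq1 (x-1) E). lra. }
  rewrite <- (ln_exp (x-1)). apply ln_le; auto.
Qed.

Lemma ln_ge x : 0 < x -> 1 - / x <= ln x.
Proof.
  intros Hx. pose proof (ln_le_xm1 (/ x) (Rinv_0_lt_compat _ Hx)).
  rewrite ln_Rinv in H by auto. lra.
Qed.

Lemma cont_int t x : 0 < x -> continuous (integrand t) x.
Proof. intros. apply (@ex_derive_continuous R_AbsRing R_NormedModule). unfold integrand. auto_derive. lra. Qed.

Lemma exRInt t a b : 1 <= a -> a <= b -> ex_RInt (integrand t) a b.
Proof.
  intros. apply (@ex_RInt_continuous R_CompleteNormedModule). intros z Hz.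
  rewrite Rmin_left in Hz by lra. apply cont_int; lra.
Qed.

Lemma int_pos t x : 0 <= integrand t x.
Proof. unfold integrand. left; apply exp_pos. Qed.

Lemma is_RInt_expl c a b : c <> 0 ->
  is_RInt (fun x => exp (- c * (x - 1))) a b
    ((exp (- c * (a - 1)) - exp (- c * (b - 1))) / c).
Proof.
  intros Hc.
  replace ((exp (- c * (a - 1)) - exp (- c * (b - 1))) / c) with
    (minus ((fun x => - exp (- c * (x - 1)) / c) b) ((fun x => - exp (- c * (x - 1)) / c) a)).
  2:{ unfold minus, plus, opp; simpl. field. auto. }
  apply (@is_RInt_derive R_CompleteNormedModule (fun x => - exp (- c * (x - 1)) / c)).
  - intros x _. auto_derive; auto. replace (x + - (1)) with (x - 1) by ring. field. auto.
  - intros x _. apply (@ex_derive_continuous R_AbsRing R_NormedModule). auto_derive. auto.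
Qed.

Lemma ex_expl c a b : c <> 0 -> ex_RInt (fun x => exp (- c * (x - 1))) a b.
Proof. intros. eexists. apply is_RInt_expl; auto. Qed.

Lemma improper (f : R -> R) a M :
  (forall b, a <= b -> ex_RInt f a b) ->
  (forall x, a <= x -> 0 <= f x) ->
  (forall b, a <= b -> RInt f a b <= M) ->
  exists l, is_RInt_gen f (at_point a) (Rbar_locally p_infty) l /\
    (forall b, a <= b -> RInt f a b <= l) /\ l <= M.
Proof.
  intros Hex Hpos HM.
  set (E := fun y => exists b, a <= b /\ y = RInt f a b).
  assert (Hb : bound E). { exists M. intros y [b [Hab ->]]. auto. }
  assert (Hne : exists y, E y). { exists (RInt f a a). exists a. split; auto; lra. }
  destruct (completeness E Hb Hne) as [l [Hub Hlub]].
  assert (Hmono : forall b b', a <= b -> b <= b' -> RInt f a b <= RInt f a b').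
  { intros b b' H1 H2. rewrite <- (RInt_Chasles f a b b').
    2: apply Hex; lra.
    2: apply (ex_RInt_Chasles_2 f a b b'); [lra| apply Hex; lra].
    unfold plus; simpl.
    assert (0 <= RInt f b b').
    { apply RInt_ge_0; auto. apply (ex_RInt_Chasles_2 f a b b'); [lra| apply Hex; lra].
      intros; apply Hpos; lra. }
    lra. }
  exists l. split; [|split].
  - apply filterlimi_locally.
    intros eps.
    assert (Hex0 : exists b0, a <= b0 /\ l - eps < RInt f a b0).
    { apply NNPP. intros Hn.
      assert (Hu : is_upper_bound E (l - eps)).
      { intros y [b [Hab ->]]. apply Rnot_lt_le. intros Hlt. apply Hn. exists b; auto. }
      pose proof (Hlub _ Hu). destruct eps; simpl in *; lra. }
    destruct Hex0 as [b0 [Hab0 Hb0]].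
    exists (fun x => x = a) (fun y => b0 < y).
    + reflexivity.
    + exists b0. auto.
    + intros x y -> Hy. exists (RInt f a y). split.
      * simpl. apply (@RInt_correct R_CompleteNormedModule). apply Hex. lra.
      * simpl. change (Rabs (RInt f a y - l) < eps).
        assert (RInt f a y <= l). { apply Hub. exists y. split; auto; lra. }
        pose proof (Hmono b0 y Hab0 ltac:(lra)).
        rewrite Rabs_left1 by lra. lra.
  - intros b Hb'. apply Hub. exists b; auto.
  - apply Hlub. intros y [b [Hab ->]]. auto.
Qed.

Lemma exp_mono x y : x <= y -> exp x <= exp y.
Proof. intros [H|H]. left; apply exp_increasing; auto. subst; lra. Qed.

Lemma bounds t : 0 < t ->
  exists l, is_RInt_gen (integrand t) (at_point 1) (Rbar_locally p_infty) l /\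
    (forall b, 1 <= b -> RInt (integrand t) 1 b <= l) /\ l <= 1 / t.
Proof.
  intros Ht. apply improper.
  - intros b Hb. apply exRInt; lra.
  - intros; apply int_pos.
  - intros b Hb.
    apply Rle_trans with (RInt (fun x => exp (- t * (x - 1))) 1 b).
    + apply RInt_le; auto. apply exRInt; lra. apply ex_expl; lra.
      intros x Hx. unfold integrand. apply exp_mono.
      pose proof (ln_ge x ltac:(lra)).
      assert (x * (1 - / x) = x - 1) by (field; lra).
      assert (x * (1 - / x) <= x * ln x) by (apply Rmult_le_compat_l; lra).
      nra.
    + rewrite (is_RInt_unique _ _ _ _ (is_RInt_expl t 1 b ltac:(lra))).
      replace (1 - 1) with 0 by ring. rewrite Rmult_0_r, exp_0.
      pose proof (exp_pos (- t * (b - 1))).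
      unfold Rdiv. apply Rmult_le_compat_r. left; apply Rinv_0_lt_compat; lra. lra.
Qed.

Lemma lower t d : 0 < t -> 0 < d ->
  1 - d - exp (- (t * d)) <= t * RInt (integrand t) 1 (1 + d).
Proof.
  intros Ht Hd. set (c := t * (1 + d)).
  assert (Hc : 0 < c) by (unfold c; nra).
  assert (H1 : RInt (fun x => exp (- c * (x - 1))) 1 (1 + d) <= RInt (integrand t) 1 (1 + d)).
  { apply RInt_le. lra. apply ex_expl; lra. apply exRInt; lra.
    intros x Hx. unfold integrand. apply exp_mono.
    pose proof (ln_le_xm1 x ltac:(lra)).
    assert (x * ln x <= x * (x - 1)) by (apply Rmult_le_compat_l; lra).
    assert (x * (x - 1) <= (1 + d) * (x - 1)) by nra.
    assert (t * (x * ln x) <= t * ((1 + d) * (x - 1))) by (apply Rmult_le_compat_l; lra).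
    unfold c. replace (- t * x * ln x) with (- (t * (x * ln x))) by ring.
    replace (- (t * (1 + d)) * (x - 1)) with (- (t * ((1 + d) * (x - 1)))) by ring. lra. }
  rewrite (is_RInt_unique _ _ _ _ (is_RInt_expl c 1 (1 + d) ltac:(lra))) in H1.
  replace (1 - 1) with 0 in H1 by ring. rewrite Rmult_0_r, exp_0 in H1.
  replace (1 + d - 1) with d in H1 by ring.
  assert (He : exp (- c * d) <= exp (- (t * d))) by (apply exp_mono; unfold c; nra).
  assert (He2 : exp (- c * d) <= 1) by (rewrite <- exp_0; apply exp_mono; nra).
  assert (Hv : t * ((1 - exp (- c * d)) / c) = (1 - exp (- c * d)) / (1 + d)).
  { unfold c. field. lra. }
  assert (t * ((1 - exp (- c * d)) / c) <= t * RInt (integrand t) 1 (1 + d)) by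
    (apply Rmult_le_compat_l; lra).
  assert (1 - d - exp (- (t * d)) <= (1 - exp (- c * d)) / (1 + d)).
  { apply Rmult_le_reg_r with (1 + d). lra. unfold Rdiv. rewrite Rmult_assoc, Rinv_l by lra.
    pose proof (exp_pos (- (t*d))). nra. }
  lra.
Qed.

Theorem mainTheorem9 :
  (forall t : R, 0 < t ->
     ex_RInt_gen (integrand t) (at_point 1) (Rbar_locally p_infty)) /\
  is_lim ftilde p_infty 1.
Proof.
  split.
  - intros t Ht. destruct (bounds t Ht) as [l [Hl _]]. exists l; exact Hl.
  - apply is_lim_spec. intros eps. simpl.
    set (d := eps / 2).
    assert (Hd : 0 < d) by (unfold d; destruct eps; simpl; lra).
    exists (1 / (d * d)). intros t Ht.
    assert (Hdd : 0 < 1 / (d * d)) by (apply Rdiv_lt_0_compat; nra).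
    assert (Htp : 0 < t) by lra.
    destruct (bounds t Htp) as [l [Hl [Hb Hu]]].
    assert (Hf : ftilde t = t * l).
    { unfold ftilde. f_equal. apply is_RInt_gen_unique. exact Hl. }
    rewrite Hf.
    assert (Hup : t * l <= 1).
    { apply Rmult_le_compat_l with (r := t) in Hu; [|lra].
      replace (t * (1 / t)) with 1 in Hu by (field; lra). exact Hu. }
    pose proof (lower t d Htp Hd) as Hlo.
    assert (t * RInt (integrand t) 1 (1 + d) <= t * l) by
      (apply Rmult_le_compat_l; [lra| apply Hb; lra]).
    assert (Htd : 1 / d < t * d).
    { apply Rmult_lt_compat_r with (r := d) in Ht; auto.
      replace (1 / (d * d) * d) with (1 / d) in Ht by (field; lra). exact Ht. }
    assert (Hexp : exp (- (t * d)) < d).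
    { rewrite exp_Ropp. pose proof (exp_ineq1_le (t * d)).
      assert (1 / d * d = 1) by (field; lra).
      assert (0 < t * d) by nra.
      apply Rmult_lt_reg_l with (exp (t * d)). apply exp_pos.
      rewrite Rinv_r by (apply Rgt_not_eq, exp_pos).
      assert ((1 / d) * d < (t * d) * d) by (apply Rmult_lt_compat_r; lra).
      assert ((1 + t * d) * d <= exp (t * d) * d) by (apply Rmult_le_compat_r; lra).
      nra. }
    assert (eps = 2 * d :> R) by (unfold d; field).
    rewrite Rabs_left1 by lra. lra.
Qed.
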